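(* Let $\mathfrak M$ be a D2-brane with $[X^i,X^j] = \imath \Theta^{ij}$, and $\Delta \vec X^2 \equiv \langle \hspace{-0.2em} \langle \Psi |\vec X^2 |\Psi \rangle \hspace{-0.2em} \rangle - \langle \hspace{-0.2em} \langle \Psi|\vec X|\Psi \rangle \hspace{-0.2em} \rangle^2$ be the square uncertainty onto the location in the state $\Psi \in \mathbb C^2 \otimes \mathscr F$ ($\vec X^2 \equiv \delta_{ij} X^i X^j$). Then \begin{equation} \Delta \vec X^2 \geq \frac{1}{2} {\varepsilon_{ij}}^k \langle \hspace{-0.2em} \langle \sigma_k \otimes \Theta^{ij} \rangle \hspace{-0.2em} \rangle . \end{equation}
   Context: A noncommutative D2-brane $\mathfrak M = (\mathfrak X,\mathbb C^2\otimes \mathscr F, D_x)$ is a spectral triple where $\mathscr F$ is a separable Hilbert space, $\mathfrak X$ is a $*$-algebra of operators acting on $\mathscr F$, and $D_x = \sigma_i \otimes (X^i-x^i)$ is its Dirac operator, with $(\sigma_i)$ the Pauli matrices, $(X^i)_{i=1,2,3}$ self-adjoint operators of $\mathfrak X$ (coordinate observables) and $x\in\mathbb R^3$ a classical parameter. $\langle \hspace{-0.2em} \langle \cdot \rangle \hspace{-0.2em} \rangle$ denotes the expectation value in the state $\Psi \in \mathbb C^2\otimes\mathscr F$. *)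

(* Defs.v *)
From HB Require Import structures.
From mathcomp Require Import all_boot all_order all_algebra.
From mathcomp Require Import complex.
From mathcomp Require Import reals.
Set Implicit Arguments. Unset Strict Implicit. Unset Printing Implicit Defensive.
Import Order.TTheory GRing.Theory Num.Theory.
Local Open Scope ring_scope.

Section D2.
Variable C : numClosedFieldType.
Variable V : lmodType C.

(* A (positive-definite) Hermitian inner product on V, physics convention:
   linear in the second argument, antilinear in the first. *)
Definition inner_product (ip : V -> V -> C) : Prop :=
  [/\ (forall u v w (a : C), ip u (a *: v + w) = a * ip u v + ip u w),
      (forall u v, ip v u = (ip u v)^*),
      (forall u, 0 <= ip u u) &
      (forall u, ip u u = 0 -> u = 0)].

Definition symmetric_op (ip : V -> V -> C) (A : V -> V) : Prop :=
  forall u v, ip u (A v) = ip (A u) v.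

(* Elements of C^2 (x) V, represented as functions 'I_2 -> V. *)
Definition tensor_ip (ip : V -> V -> C) (Psi Phi : 'I_2 -> V) : C :=
  \sum_(a < 2) ip (Psi a) (Phi a).

Definition tens (s : 'M[C]_2) (A : V -> V) (Psi : 'I_2 -> V) : 'I_2 -> V :=
  fun a => \sum_(b < 2) s a b *: A (Psi b).

Definition expect (ip : V -> V -> C) (Psi : 'I_2 -> V)
  (O : ('I_2 -> V) -> ('I_2 -> V)) : C :=
  tensor_ip ip Psi (O Psi).

End D2.

(* Pauli matrices sigma_1, sigma_2, sigma_3 (indexed by 'I_3 = {0,1,2}). *)
Definition pauli {C : numClosedFieldType} (k : 'I_3) : 'M[C]_2 :=
  \matrix_(a < 2, b < 2)
    match nat_of_ord k, nat_of_ord a, nat_of_ord b with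
    | 0, 0, 1 => 1 | 0, 1, 0 => 1
    | 1, 0, 1 => - 'i | 1, 1, 0 => 'i
    | 2, 0, 0 => 1 | 2, 1, 1 => -1
    | _, _, _ => 0
    end.

(* Levi-Civita symbol eps_{ijk} with eps_{123} = 1 (indices 0,1,2). *)
Definition levi_civita {C : numClosedFieldType} (i j k : 'I_3) : C :=
  match nat_of_ord i, nat_of_ord j, nat_of_ord k with
  | 0, 1, 2 | 1, 2, 0 | 2, 0, 1 => 1
  | 0, 2, 1 | 2, 1, 0 | 1, 0, 2 => -1
  | _, _, _ => 0
  end.

(* Main.v *)
Require Import Defs.
From HB Require Import structures.
From mathcomp Require Import all_boot all_order all_algebra.
From mathcomp Require Import complex.
From mathcomp Require Import reals.
From mathcomp Require Import ring.
Import Order.TTheory GRing.Theory Num.Theory.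
Local Open Scope ring_scope.

Section Helpers.
Variable R : realType.
Variable V : lmodType R[i].
Variable ip : V -> V -> R[i].
Hypothesis Hip : inner_product ip.

Lemma ipDr u v w : ip u (v + w) = ip u v + ip u w.
Proof. case: Hip => H _ _ _. by have := H u v w 1; rewrite scale1r mul1r. Qed.
Lemma ipZr u a v : ip u (a *: v) = a * ip u v.
Proof.
case: Hip => H _ _ _. have := H u v 0 a. rewrite addr0 => ->.
have E := H u 0 0 1. rewrite scale1r mul1r addr0 in E.
have : ip u 0 = 0. by move: E; rewrite -{1}[ip u 0]addr0 => /addrI ->.
by move->; rewrite addr0.
Qed.
Lemma ip0r u : ip u 0 = 0.
Proof. by rewrite -(scale0r 0) ipZr mul0r. Qed.
Lemma ipNr u v : ip u (- v) = - ip u v.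
Proof. by rewrite -scaleN1r ipZr mulN1r. Qed.
Lemma ipBr u v w : ip u (v - w) = ip u v - ip u w.
Proof. by rewrite ipDr ipNr. Qed.
Lemma ipDl u v w : ip (v + w) u = ip v u + ip w u.
Proof. case: Hip => _ H _ _. by rewrite (H u (v+w)) (H u v) (H u w) ipDr rmorphD. Qed.
Lemma ipZl u a v : ip (a *: v) u = a^* * ip v u.
Proof. case: Hip => _ H _ _. by rewrite (H u (a *: v)) (H u v) ipZr rmorphM. Qed.
Lemma ipNl u v : ip (- v) u = - ip v u.
Proof. case: Hip => _ H _ _. by rewrite (H u (- v)) (H u v) ipNr rmorphN. Qed.
Lemma ipBl u v w : ip (v - w) u = ip v u - ip w u.
Proof. by rewrite ipDl ipNl. Qed.
Lemma ipZl_real u a v : a^* = a -> ip (a *: v) u = a * ip v u.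
Proof. by move=> ha; rewrite ipZl ha. Qed.
Lemma ipZl_i u v : ip ('i *: v) u = - 'i * ip v u.
Proof. by rewrite ipZl conjCi. Qed.
End Helpers.
Arguments ipZl_real {R V ip}.
Arguments ipZl_i {R V ip}.
Arguments ipDr {R V ip}.
Arguments ipZr {R V ip}.
Arguments ip0r {R V ip}.
Arguments ipNr {R V ip}.
Arguments ipBr {R V ip}.
Arguments ipDl {R V ip}.
Arguments ipZl {R V ip}.
Arguments ipNl {R V ip}.
Arguments ipBl {R V ip}.

Definition o3_0 : 'I_3 := @Ordinal 3 0 isT.
Definition o3_1 : 'I_3 := @Ordinal 3 1 isT.
Definition o3_2 : 'I_3 := @Ordinal 3 2 isT.
Definition o2_0 : 'I_2 := @Ordinal 2 0 isT.
Definition o2_1 : 'I_2 := @Ordinal 2 1 isT.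

Lemma sum3 (M : nmodType) (F : 'I_3 -> M) :
  \sum_(i < 3) F i = F o3_0 + F o3_1 + F o3_2.
Proof.
rewrite !big_ord_recl big_ord0 addr0 addrA.
by congr (F _ + F _ + F _); apply: val_inj.
Qed.
Lemma sum2 (M : nmodType) (F : 'I_2 -> M) :
  \sum_(i < 2) F i = F o2_0 + F o2_1.
Proof.
rewrite !big_ord_recl big_ord0 addr0.
by congr (F _ + F _); apply: val_inj.
Qed.

Lemma tens1 (R : realType) (V : lmodType R[i]) (f : V -> V) (P : 'I_2 -> V) a :
  tens 1%:M f P a = f (P a).
Proof.
rewrite /tens (bigD1 a) //= mxE eqxx mulr1n scale1r big1 ?addr0 // => b nab.
by rewrite mxE eq_sym (negbTE nab) mulr0n scale0r.
Qed.

Lemma conj0 (R : realType) : (0 : R[i])^* = 0. Proof. exact: conjC0. Qed.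
Lemma conj1 (R : realType) : (1 : R[i])^* = 1. Proof. exact: conjC1. Qed.
Lemma conjm1 (R : realType) : (-1 : R[i])^* = -1. Proof. rewrite rmorphN; congr (- _); exact: conjC1. Qed.
Lemma conji (R : realType) : ('i : R[i])^* = -'i. Proof. exact: conjCi. Qed.
Lemma conjmi (R : realType) : (-'i : R[i])^* = 'i. Proof. rewrite rmorphN -[RHS]opprK; congr (- _); exact: conjCi. Qed.

Lemma lc_000 (R : realType) : levi_civita (C:=R[i]) o3_0 o3_0 o3_0 = 0.
Proof. by []. Qed.
Lemma lc_001 (R : realType) : levi_civita (C:=R[i]) o3_0 o3_0 o3_1 = 0.
Proof. by []. Qed.
Lemma lc_002 (R : realType) : levi_civita (C:=R[i]) o3_0 o3_0 o3_2 = 0.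
Proof. by []. Qed.
Lemma lc_010 (R : realType) : levi_civita (C:=R[i]) o3_0 o3_1 o3_0 = 0.
Proof. by []. Qed.
Lemma lc_011 (R : realType) : levi_civita (C:=R[i]) o3_0 o3_1 o3_1 = 0.
Proof. by []. Qed.
Lemma lc_012 (R : realType) : levi_civita (C:=R[i]) o3_0 o3_1 o3_2 = 1.
Proof. by []. Qed.
Lemma lc_020 (R : realType) : levi_civita (C:=R[i]) o3_0 o3_2 o3_0 = 0.
Proof. by []. Qed.
Lemma lc_021 (R : realType) : levi_civita (C:=R[i]) o3_0 o3_2 o3_1 = -1.
Proof. by []. Qed.
Lemma lc_022 (R : realType) : levi_civita (C:=R[i]) o3_0 o3_2 o3_2 = 0.
Proof. by []. Qed.
Lemma lc_100 (R : realType) : levi_civita (C:=R[i]) o3_1 o3_0 o3_0 = 0.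
Proof. by []. Qed.
Lemma lc_101 (R : realType) : levi_civita (C:=R[i]) o3_1 o3_0 o3_1 = 0.
Proof. by []. Qed.
Lemma lc_102 (R : realType) : levi_civita (C:=R[i]) o3_1 o3_0 o3_2 = -1.
Proof. by []. Qed.
Lemma lc_110 (R : realType) : levi_civita (C:=R[i]) o3_1 o3_1 o3_0 = 0.
Proof. by []. Qed.
Lemma lc_111 (R : realType) : levi_civita (C:=R[i]) o3_1 o3_1 o3_1 = 0.
Proof. by []. Qed.
Lemma lc_112 (R : realType) : levi_civita (C:=R[i]) o3_1 o3_1 o3_2 = 0.
Proof. by []. Qed.
Lemma lc_120 (R : realType) : levi_civita (C:=R[i]) o3_1 o3_2 o3_0 = 1.
Proof. by []. Qed.
Lemma lc_121 (R : realType) : levi_civita (C:=R[i]) o3_1 o3_2 o3_1 = 0.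
Proof. by []. Qed.
Lemma lc_122 (R : realType) : levi_civita (C:=R[i]) o3_1 o3_2 o3_2 = 0.
Proof. by []. Qed.
Lemma lc_200 (R : realType) : levi_civita (C:=R[i]) o3_2 o3_0 o3_0 = 0.
Proof. by []. Qed.
Lemma lc_201 (R : realType) : levi_civita (C:=R[i]) o3_2 o3_0 o3_1 = 1.
Proof. by []. Qed.
Lemma lc_202 (R : realType) : levi_civita (C:=R[i]) o3_2 o3_0 o3_2 = 0.
Proof. by []. Qed.
Lemma lc_210 (R : realType) : levi_civita (C:=R[i]) o3_2 o3_1 o3_0 = -1.
Proof. by []. Qed.
Lemma lc_211 (R : realType) : levi_civita (C:=R[i]) o3_2 o3_1 o3_1 = 0.
Proof. by []. Qed.
Lemma lc_212 (R : realType) : levi_civita (C:=R[i]) o3_2 o3_1 o3_2 = 0.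
Proof. by []. Qed.
Lemma lc_220 (R : realType) : levi_civita (C:=R[i]) o3_2 o3_2 o3_0 = 0.
Proof. by []. Qed.
Lemma lc_221 (R : realType) : levi_civita (C:=R[i]) o3_2 o3_2 o3_1 = 0.
Proof. by []. Qed.
Lemma lc_222 (R : realType) : levi_civita (C:=R[i]) o3_2 o3_2 o3_2 = 0.
Proof. by []. Qed.

Definition pv {C : numClosedFieldType} (k a b : nat) : C :=
    match k, a, b with
    | 0, 0, 1 => 1 | 0, 1, 0 => 1
    | 1, 0, 1 => - 'i | 1, 1, 0 => 'i
    | 2, 0, 0 => 1 | 2, 1, 1 => -1
    | _, _, _ => 0
    end.
Lemma pauliE {C : numClosedFieldType} (k : 'I_3) (a b : 'I_2) : pauli (C:=C) k a b = pv k a b.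
Proof. by rewrite mxE. Qed.
Lemma pv_000 (R : realType) : pv (C:=R[i]) o3_0 o2_0 o2_0 = 0.
Proof. by []. Qed.
Lemma pv_001 (R : realType) : pv (C:=R[i]) o3_0 o2_0 o2_1 = 1.
Proof. by []. Qed.
Lemma pv_010 (R : realType) : pv (C:=R[i]) o3_0 o2_1 o2_0 = 1.
Proof. by []. Qed.
Lemma pv_011 (R : realType) : pv (C:=R[i]) o3_0 o2_1 o2_1 = 0.
Proof. by []. Qed.
Lemma pv_100 (R : realType) : pv (C:=R[i]) o3_1 o2_0 o2_0 = 0.
Proof. by []. Qed.
Lemma pv_101 (R : realType) : pv (C:=R[i]) o3_1 o2_0 o2_1 = - 'i.
Proof. by []. Qed.
Lemma pv_110 (R : realType) : pv (C:=R[i]) o3_1 o2_1 o2_0 = 'i.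
Proof. by []. Qed.
Lemma pv_111 (R : realType) : pv (C:=R[i]) o3_1 o2_1 o2_1 = 0.
Proof. by []. Qed.
Lemma pv_200 (R : realType) : pv (C:=R[i]) o3_2 o2_0 o2_0 = 1.
Proof. by []. Qed.
Lemma pv_201 (R : realType) : pv (C:=R[i]) o3_2 o2_0 o2_1 = 0.
Proof. by []. Qed.
Lemma pv_210 (R : realType) : pv (C:=R[i]) o3_2 o2_1 o2_0 = 0.
Proof. by []. Qed.
Lemma pv_211 (R : realType) : pv (C:=R[i]) o3_2 o2_1 o2_1 = -1.
Proof. by []. Qed.

Section Exp.
Variable R : realType.
Variable V : lmodType R[i].
Variable ip : V -> V -> R[i].
Hypothesis Hip : inner_product ip.

Lemma expect_1 (P : 'I_2 -> V) (T : V -> V) :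
  expect ip P (tens 1%:M T) = ip (P o2_0) (T (P o2_0)) + ip (P o2_1) (T (P o2_1)).
Proof. by rewrite /expect /tensor_ip sum2 !tens1. Qed.
Lemma expect_gen (P : 'I_2 -> V) (S : 'M[R[i]]_2) (T : V -> V) :
  expect ip P (tens S T) = S o2_0 o2_0 * ip (P o2_0) (T (P o2_0))
    + S o2_0 o2_1 * ip (P o2_0) (T (P o2_1))
    + S o2_1 o2_0 * ip (P o2_1) (T (P o2_0))
    + S o2_1 o2_1 * ip (P o2_1) (T (P o2_1)).
Proof. rewrite /expect /tensor_ip /tens !sum2 !(ipDr Hip) !(ipZr Hip); ring. Qed.

Lemma rhs_gen (P : 'I_2 -> V) (Th : 'I_3 -> 'I_3 -> {linear V -> V}) :
  \sum_(i < 3) \sum_(j < 3) \sum_(k < 3) levi_civita i j k * expect ip P (tens (pauli k) (Th i j))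
  = \sum_(i < 3) \sum_(j < 3) \sum_(k < 3) levi_civita i j k *
     (pv k o2_0 o2_0 * ip (P o2_0) (Th i j (P o2_0))
    + pv k o2_0 o2_1 * ip (P o2_0) (Th i j (P o2_1))
    + pv k o2_1 o2_0 * ip (P o2_1) (Th i j (P o2_0))
    + pv k o2_1 o2_1 * ip (P o2_1) (Th i j (P o2_1))).
Proof.
apply: eq_bigr => i _; apply: eq_bigr => j _; apply: eq_bigr => k _.
by rewrite expect_gen !pauliE.
Qed.
End Exp.
Arguments rhs_gen {R V ip}.

Local Open Scope complex_scope.
Theorem mainTheorem1 (R : realType) (V : lmodType R[i])
  (ip : V -> V -> R[i]) (X : 'I_3 -> {linear V -> V})
  (Theta : 'I_3 -> 'I_3 -> {linear V -> V}) (Psi : 'I_2 -> V) :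
  inner_product ip ->
  (forall i, symmetric_op ip (X i)) ->
  (forall i j v, X i (X j v) - X j (X i v) = 'i *: Theta i j v) ->
  tensor_ip ip Psi Psi = 1 ->
  let DeltaX2 :=
    expect ip Psi (tens 1%:M (fun v => \sum_(i < 3) X i (X i v)))
    - \sum_(i < 3) (expect ip Psi (tens 1%:M (X i))) ^+ 2 in
  DeltaX2 >= 2^-1 * \sum_(i < 3) \sum_(j < 3) \sum_(k < 3)
               (levi_civita i j k : R[i]) * expect ip Psi (tens (pauli k) (Theta i j)).
Proof.
move=> Hip Hsym Hcom Hn; cbv zeta.
have HT : forall i j v, Theta i j v = (- 'i) *: (X i (X j v) - X j (X i v)).
  by move=> i j v; rewrite Hcom scalerA mulNr mulrC mulCii opprK scale1r.
have Hs : forall i u v, ip u (X i v) = ip (X i u) v by move=> i; apply: Hsym.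
pose x i := ip (Psi o2_0) (X i (Psi o2_0)) + ip (Psi o2_1) (X i (Psi o2_1)).
have Hx : forall i, (x i)^* = x i.
  move=> i; rewrite /x rmorphD; case: Hip => _ H _ _.
  by rewrite [in RHS]Hs [in RHS](Hs _ (Psi o2_1)) (H (Psi o2_0)) (H (Psi o2_1)).
pose A i v := X i v - x i *: v.
pose Phi0 := A o3_0 (Psi o2_1) - 'i *: A o3_1 (Psi o2_1) + A o3_2 (Psi o2_0).
pose Phi1 := A o3_0 (Psi o2_0) + 'i *: A o3_1 (Psi o2_0) - A o3_2 (Psi o2_1).
have Hpos : 0 <= ip Phi0 Phi0 + ip Phi1 Phi1.
  by case: Hip => _ _ H _; apply: addr_ge0; apply: H.
rewrite -subr_ge0; apply: (le_trans Hpos) => {Hpos}; rewrite le_eqVlt; apply/orP; left; apply/eqP.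
rewrite (rhs_gen Hip).
rewrite !expect_1 !sum3 !expect_1.
rewrite ?lc_000 ?lc_001 ?lc_002 ?lc_010 ?lc_011 ?lc_012 ?lc_020 ?lc_021 ?lc_022 ?lc_100 ?lc_101 ?lc_102 ?lc_110 ?lc_111 ?lc_112 ?lc_120 ?lc_121 ?lc_122 ?lc_200 ?lc_201 ?lc_202 ?lc_210 ?lc_211 ?lc_212 ?lc_220 ?lc_221 ?lc_222.
rewrite ?pv_000 ?pv_001 ?pv_010 ?pv_011 ?pv_100 ?pv_101 ?pv_110 ?pv_111 ?pv_200 ?pv_201 ?pv_210 ?pv_211.
rewrite ?mul0r ?mulr0 ?add0r ?addr0.
rewrite !HT.
rewrite /Phi0 /Phi1 /A.
rewrite !(ipBr Hip, ipDr Hip, ipZr Hip, ipBl Hip, ipDl Hip, ipZl_i Hip, ipZl_real Hip _ _ _ (Hx _)).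
rewrite !Hs.
rewrite /x !Hs.
have Hn' : ip (Psi o2_0) (Psi o2_0) = 1 - ip (Psi o2_1) (Psi o2_1).
  by move: Hn; rewrite /tensor_ip sum2 => <-; rewrite addrK.
field: (@mulCii (R[i])) Hn'.
all: done.
Qed.
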